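(* Let $K$ be a field of characteristic zero and $S=K[X_0,X_1,Y_0,Y_1]$ with the bigrading $\deg X_0=\deg X_1=(1,0)$, $\deg Y_0=\deg Y_1=(0,1)$. Let $\mathbb{Y}=\sum_{(i,j)\in D_{\mathbb{X}}} m_{ij}P_{ij}$ be a fat point scheme in $\mathbb{P}^1\times\mathbb{P}^1$ with vanishing ideal $I_{\mathbb{Y}}=\bigcap_{(i,j)\in D_{\mathbb{X}}}\wp_{ij}^{m_{ij}}$, let $(i,j)\in D_{\mathbb{X}}$, and let $G\in S$ be a separator of $P_{ij}$ in $\mathbb{Y}$, i.e. a bihomogeneous element with $G\in \wp_{ij}^{m_{ij}-1}\setminus \wp_{ij}^{m_{ij}}$ and $G\in \wp_{kl}^{m_{kl}}$ for all $(k,l)\in D_{\mathbb{X}}\setminus\{(i,j)\}$. Then the ideal $I_{\mathbb{Y}}+\langle G\rangle$ defines a subscheme of $\mathbb{Y}$ of degree $\deg(\mathbb{Y})-1$.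
   Context: A point $P=[a_0:a_1]\times[b_0:b_1]\in\mathbb{P}^1\times\mathbb{P}^1$ (over $K$) has vanishing ideal $\langle a_1X_0-a_0X_1,\ b_1Y_0-b_0Y_1\rangle\subseteq S$. For a finite set $\mathbb{X}$ of distinct points of $\mathbb{P}^1\times\mathbb{P}^1$, write $\pi_1(\mathbb{X})=\{Q_1,\dots,Q_r\}$ for the distinct first coordinates, $\pi_2(\mathbb{X})=\{R_1,\dots,R_t\}$ for the distinct second coordinates, $P_{ij}=Q_i\times R_j$, $D_{\mathbb{X}}=\{(i,j)\mid P_{ij}\in\mathbb{X}\}$, and $\wp_{ij}$ the vanishing ideal of $P_{ij}$. For positive integers $m_{ij}$, the fat point scheme $\mathbb{Y}=\sum m_{ij}P_{ij}$ is the subscheme defined by $I_{\mathbb{Y}}=\bigcap\wp_{ij}^{m_{ij}}$. The degree of a zero-dimensional subscheme $\mathbb{Z}$ of $\mathbb{P}^1\times\mathbb{P}^1$ defined by a bihomogeneous ideal $I$ is the value $\dim_K (S/I)_{a,b}$ for all $a,b\gg0$ (for $\mathbb{Y}$ it equals $\sum\binom{m_{ij}+1}{2}$). *)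

(* Defs.v *)
From HB Require Import structures.
From mathcomp Require Import all_boot all_order all_algebra.
From mathcomp Require Import mpoly.
Set Implicit Arguments. Unset Strict Implicit. Unset Printing Implicit Defensive.
Import GRing.Theory.
Local Open Scope ring_scope.

Notation S K := {mpoly K[4]}.
Definition iX0 : 'I_4 := @Ordinal 4 0 isT.
Definition iX1 : 'I_4 := @Ordinal 4 1 isT.
Definition iY0 : 'I_4 := @Ordinal 4 2 isT.
Definition iY1 : 'I_4 := @Ordinal 4 3 isT.

Section Defs.
Variable K : fieldType.

Definition bihom (f : S K) (a b : nat) : Prop :=
  forall mm, mm \in msupp f ->
    (mm iX0 + mm iX1 = a)%N /\ (mm iY0 + mm iY1 = b)%N.

Definition in_ideal (gens : seq (S K)) (f : S K) : Prop :=
  exists c : seq (S K), size c = size gens /\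
    f = \sum_(i < size gens) c`_i * gens`_i.

Fixpoint pow_gens (gens : seq (S K)) (m : nat) : seq (S K) :=
  if m is m'.+1 then [seq g * h | g <- gens, h <- pow_gens gens m'] else [:: 1].

(* vanishing ideal of [a0:a1] x [b0:b1]: < a1 X0 - a0 X1, b1 Y0 - b0 Y1 > *)
Definition pt_gens (P : (K * K) * (K * K)) : seq (S K) :=
  [:: P.1.2 *: 'X_iX0 - P.1.1 *: 'X_iX1; P.2.2 *: 'X_iY0 - P.2.1 *: 'X_iY1].

Definition in_pt_pow (P : (K * K) * (K * K)) (m : nat) (f : S K) : Prop :=
  in_ideal (pow_gens (pt_gens P) m) f.

(* dim_K (S/J)_{a,b} = d : there are d bihomogeneous elements of bidegree (a,b)
   whose classes form a K-basis of S_{a,b} / (J cap S_{a,b}). *)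
Definition quot_dim (J : S K -> Prop) (a b d : nat) : Prop :=
  exists s : 'I_d -> S K,
    (forall i, bihom (s i) a b) /\
    (forall c : 'I_d -> K, J (\sum_(i < d) c i *: s i) -> forall i, c i = 0) /\
    (forall f, bihom f a b -> exists c : 'I_d -> K, J (f - \sum_(i < d) c i *: s i)).

(* the zero-dimensional subscheme defined by J has degree e:
   dim_K (S/J)_{a,b} = e for all a,b >> 0 *)
Definition scheme_degree (J : S K -> Prop) (e : nat) : Prop :=
  exists N : nat, forall a b : nat, (N <= a)%N -> (N <= b)%N -> quot_dim J a b e.

End Defs.

(* Main.v *)
Require Import Defs.
From HB Require Import structures.
From mathcomp Require Import all_boot all_order all_algebra.
From mathcomp Require Import mpoly.
From mathcomp Require Import zify ring.
Import GRing.Theory.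
Local Open Scope ring_scope.

Set Implicit Arguments. Unset Strict Implicit. Unset Printing Implicit Defensive.
Section Work.
Variable K : fieldType.
Local Notation S := {mpoly K[4]}.
Implicit Types (f g : S) (gens G : seq S).

Lemma bihom0 a b : bihom (0 : S) a b.
Proof. by move=> e; rewrite -mpolyC0 msupp0. Qed.

Lemma bihom1 : bihom (1 : S) 0 0.
Proof. by move=> e; rewrite msupp1 inE => /eqP ->; rewrite !mnm0E. Qed.

Lemma bihomD f g a b : bihom f a b -> bihom g a b -> bihom (f + g) a b.
Proof.
move=> hf hg e /msuppD_le; rewrite mem_cat => /orP [/hf|/hg] //.
Qed.

Lemma bihomZ c f a b : bihom f a b -> bihom (c *: f) a b.
Proof. by move=> hf e /msuppZ_le /hf. Qed.

Lemma bihomN f a b : bihom f a b -> bihom (- f) a b.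
Proof. by move=> hf e; rewrite (perm_mem (msuppN f)) => /hf. Qed.

Lemma bihomB f g a b : bihom f a b -> bihom g a b -> bihom (f - g) a b.
Proof. by move=> hf hg; apply: bihomD => //; apply: bihomN. Qed.

Lemma bihomM f g a b c d : bihom f a b -> bihom g c d -> bihom (f * g) (a + c) (b + d).
Proof.
move=> hf hg e /msuppM_le /allpairsP [[e1 e2] /= [/hf [h1 h2] /hg [h3 h4] ->]].
by rewrite !mnmDE; split; lia.
Qed.

Lemma bihomXm (e : 'X_{1..4}) : bihom ('X_[e] : S) (e iX0 + e iX1) (e iY0 + e iY1).
Proof. by move=> e' /mem_msuppXP <-. Qed.

Lemma bihom_sum (I : Type) (s : seq I) (P : pred I) (F : I -> S) a b :
  (forall k, P k -> bihom (F k) a b) -> bihom (\sum_(k <- s | P k) F k) a b.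
Proof. by move=> H; apply: (big_ind (fun x : S => bihom x a b)); [exact: bihom0 | move=> x y; exact: bihomD | done]. Qed.

Lemma bihom_prod (I : Type) (s : seq I) (P : pred I) (F : I -> S) da db :
  (forall k, P k -> bihom (F k) (da k) (db k)) ->
  bihom (\prod_(k <- s | P k) F k) (\sum_(k <- s | P k) da k) (\sum_(k <- s | P k) db k).
Proof.
move=> H; elim: s => [|x s IH]; first by rewrite !big_nil; exact: bihom1.
rewrite !big_cons; case Px: (P x) => //; by apply: bihomM => //; apply: H.
Qed.

Lemma bihomXn f a b n : bihom f a b -> bihom (f ^+ n) (n * a) (n * b).
Proof.
move=> hf; elim: n => [|n IH]; first by rewrite expr0; apply: bihom1.
by rewrite exprS !mulSn; apply: bihomM.
Qed.

Lemma bihomW f a b a' b' : bihom f a b -> a = a' -> b = b' -> bihom f a' b'.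
Proof. by move=> h <- <-. Qed.

Definition ordX f (k : nat) := forall e, e \in msupp f -> (k <= e iX1 + e iY1)%N.

Lemma ordX0 k : ordX 0 k.
Proof. by move=> e; rewrite -mpolyC0 msupp0. Qed.

Lemma ordXD f g k : ordX f k -> ordX g k -> ordX (f + g) k.
Proof. by move=> hf hg e /msuppD_le; rewrite mem_cat => /orP [/hf|/hg]. Qed.

Lemma ordXZ c f k : ordX f k -> ordX (c *: f) k.
Proof. by move=> hf e /msuppZ_le /hf. Qed.

Lemma ordXN f k : ordX f k -> ordX (- f) k.
Proof. by move=> hf e; rewrite (perm_mem (msuppN f)) => /hf. Qed.

Lemma ordXM f g p q : ordX f p -> ordX g q -> ordX (f * g) (p + q).
Proof.
move=> hf hg e /msuppM_le /allpairsP [[e1 e2] /= [/hf h1 /hg h2 ->]].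
rewrite !mnmDE; lia.
Qed.

Lemma ordXMl f g q : ordX g q -> ordX (f * g) q.
Proof. by move=> hg; apply: (@ordXM f g 0 q) => // e _. Qed.

Lemma ordX_sum (I : Type) (s : seq I) (P : pred I) (F : I -> S) k :
  (forall i, P i -> ordX (F i) k) -> ordX (\sum_(i <- s | P i) F i) k.
Proof. by move=> H; apply: (big_ind (fun x : S => ordX x k)); [exact: ordX0 | move=> x y; exact: ordXD | done]. Qed.

Lemma ordXW f p q : ordX f p -> (q <= p)%N -> ordX f q.
Proof. by move=> h hq e /h; apply: leq_trans. Qed.


Lemma in_idealP (gens : seq S) f :
  (exists c : 'I_(size gens) -> S, f = \sum_i c i * gens`_i) <-> in_ideal gens f.
Proof.
split.
  case=> c ->; exists [seq c i | i <- enum 'I_(size gens)].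
  rewrite size_map size_enum_ord; split=> //.
  by apply: eq_bigr => i _; rewrite (nth_map i) ?size_enum_ord // nth_ord_enum.
case=> c [_ ->]; by exists (fun i => c`_i).
Qed.

Lemma in_ideal0 gens : in_ideal gens 0.
Proof. by apply/in_idealP; exists (fun _ => 0); rewrite big1 // => i _; rewrite mul0r. Qed.

Lemma in_idealD gens f g : in_ideal gens f -> in_ideal gens g -> in_ideal gens (f + g).
Proof.
move=> /in_idealP [c ->] /in_idealP [d ->]; apply/in_idealP.
by exists (fun i => c i + d i); rewrite -big_split; apply: eq_bigr => i _; rewrite mulrDl.
Qed.

Lemma in_idealMl gens x f : in_ideal gens f -> in_ideal gens (x * f).
Proof.
move=> /in_idealP [c ->]; apply/in_idealP; exists (fun i => x * c i).
by rewrite mulr_sumr; apply: eq_bigr => i _; rewrite mulrA.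
Qed.

Lemma in_idealMr gens x f : in_ideal gens f -> in_ideal gens (f * x).
Proof. by rewrite mulrC; apply: in_idealMl. Qed.

Lemma in_idealZ gens c f : in_ideal gens f -> in_ideal gens (c *: f).
Proof. by rewrite -mul_mpolyC; apply: in_idealMl. Qed.

Lemma in_idealN gens f : in_ideal gens f -> in_ideal gens (- f).
Proof. by rewrite -scaleN1r; apply: in_idealZ. Qed.

Lemma in_idealB gens f g : in_ideal gens f -> in_ideal gens g -> in_ideal gens (f - g).
Proof. by move=> hf hg; apply: in_idealD => //; apply: in_idealN. Qed.

Lemma in_ideal_sum gens (I : Type) (s : seq I) (P : pred I) (F : I -> S) :
  (forall i, P i -> in_ideal gens (F i)) -> in_ideal gens (\sum_(i <- s | P i) F i).
Proof.
move=> H; apply: (big_ind (fun x : S => in_ideal gens x)) => //.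
  exact: in_ideal0.
by move=> x y; apply: in_idealD.
Qed.

Lemma in_ideal_mem (gens : seq S) g : g \in gens -> in_ideal gens g.
Proof.
move=> gin; apply/in_idealP.
have ig : (index g gens < size gens)%N by rewrite index_mem.
exists (fun i => ((i : nat) == index g gens)%:R).
rewrite (bigD1 (Ordinal ig)) //= eqxx mul1r nth_index // big1 ?addr0 //.
move=> i /eqP ne; case: eqP => e; last by rewrite mul0r.
by case: ne; apply: val_inj.
Qed.

Lemma in_ideal_sub (gens1 gens2 : seq S) f :
  (forall g, g \in gens1 -> in_ideal gens2 g) -> in_ideal gens1 f -> in_ideal gens2 f.
Proof.
move=> H /in_idealP [c ->]; apply: in_ideal_sum => i _.
by apply: in_idealMl; apply: H; apply: mem_nth.
Qed.

Lemma in_ideal_mulr (gens2 gens3 : seq S) g y :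
  (forall h, h \in gens2 -> in_ideal gens3 (g * h)) -> in_ideal gens2 y ->
  in_ideal gens3 (g * y).
Proof.
move=> H /in_idealP [c ->]; rewrite mulr_sumr; apply: in_ideal_sum => i _.
by rewrite mulrCA; apply: in_idealMl; apply: H; apply: mem_nth.
Qed.

Lemma pow_gensM (G : seq S) k l g h :
  g \in pow_gens G k -> h \in pow_gens G l -> g * h \in pow_gens G (k + l).
Proof.
elim: k g => [|k IH] g /=.
  by rewrite inE => /eqP -> hin; rewrite mul1r.
move=> /allpairsP [[g1 g2] /= [g1in g2in ->]] hin.
apply/allpairsP; exists (g1, g2 * h) => /=; split=> //; first exact: IH.
by rewrite mulrA.
Qed.

Lemma pow_idealM (G : seq S) k l x y :
  in_ideal (pow_gens G k) x -> in_ideal (pow_gens G l) y ->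
  in_ideal (pow_gens G (k + l)) (x * y).
Proof.
move=> hx hy; rewrite mulrC; apply: (in_ideal_mulr _ hx) => g gin.
rewrite mulrC; apply: (in_ideal_mulr _ hy) => h hin.
by apply: in_ideal_mem; apply: pow_gensM.
Qed.

Lemma pow_ideal_le (G : seq S) k l f :
  (l <= k)%N -> in_ideal (pow_gens G k) f -> in_ideal (pow_gens G l) f.
Proof.
move=> /subnK <-; elim: (k - l)%N f => [|d IH] f //.
rewrite addSn => hf; apply: IH; apply: (in_ideal_sub _ hf) => g /=.
move=> /allpairsP [[g1 g2] /= [g1in g2in ->]].
by apply: in_idealMl; apply: in_ideal_mem.
Qed.

Lemma pow_ideal_Xn (G : seq S) k x n :
  in_ideal (pow_gens G k) x -> in_ideal (pow_gens G (n * k)) (x ^+ n).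
Proof.
move=> hx; elim: n => [|n IH]; first by rewrite expr0; apply: in_ideal_mem; rewrite inE.
by rewrite exprS mulSn; apply: pow_idealM.
Qed.


Lemma comp_comp (p : S) (lq lr : 4.-tuple S) :
  (p \mPo lq) \mPo lr = p \mPo [tuple (tnth lq i) \mPo lr | i < 4].
Proof.
rewrite (comp_mpolyEX p lq) [RHS]comp_mpolyEX (big_morph _ (comp_mpolyD lr) (comp_mpoly0 lr)); apply: eq_bigr => e _.
rewrite !comp_mpolyZ; congr (_ *: _).
rewrite !comp_mpolyX rmorph_prod /=; apply: eq_bigr => i _.
by rewrite rmorphXn /= tnth_mktuple.
Qed.

Lemma tuple4_eq (t1 t2 : 4.-tuple S) :
  tnth t1 iX0 = tnth t2 iX0 -> tnth t1 iX1 = tnth t2 iX1 ->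
  tnth t1 iY0 = tnth t2 iY0 -> tnth t1 iY1 = tnth t2 iY1 -> t1 = t2.
Proof.
move=> h0 h1 h2 h3; apply: eq_from_tnth => -[[|[|[|[|n]]]] Hi] //.
- by have -> : Ordinal Hi = iX0 by apply: val_inj.
- by have -> : Ordinal Hi = iX1 by apply: val_inj.
- by have -> : Ordinal Hi = iY0 by apply: val_inj.
- by have -> : Ordinal Hi = iY1 by apply: val_inj.
Qed.

Definition lin2 (u v : K) (i0 i1 : 'I_4) : S := u *: 'X_i0 + v *: 'X_i1.

Lemma lin2_comp u v i0 i1 (lq : 4.-tuple S) :
  lin2 u v i0 i1 \mPo lq = u *: tnth lq i0 + v *: tnth lq i1.
Proof. by rewrite /lin2 comp_mpolyD !comp_mpolyZ !comp_mpolyXU -!tnth_nth. Qed.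

Lemma lin2_comb c1 c2 u1 v1 u2 v2 i0 i1 :
  c1 *: lin2 u1 v1 i0 i1 + c2 *: lin2 u2 v2 i0 i1 =
  lin2 (c1 * u1 + c2 * u2) (c1 * v1 + c2 * v2) i0 i1.
Proof.
rewrite /lin2 !scalerDr !scalerA !scalerDl.
by rewrite addrACA.
Qed.

Lemma lin2_eq u v u' v' i0 i1 : u = u' -> v = v' -> lin2 u v i0 i1 = lin2 u' v' i0 i1.
Proof. by move=> -> ->. Qed.

Lemma lin2_X0 i0 i1 : lin2 1 0 i0 i1 = 'X_i0.
Proof. by rewrite /lin2 scale1r scale0r addr0. Qed.

Lemma lin2_X1 i0 i1 : lin2 0 1 i0 i1 = 'X_i1.
Proof. by rewrite /lin2 scale1r scale0r add0r. Qed.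

Definition cb (c : K * K) : K * K := if c.1 == 0 then (1, 0) else (0, 1).
Definition dt (c : K * K) : K := c.1 * (cb c).2 - (cb c).1 * c.2.

Lemma dt_neq0 c : c.1 != 0 \/ c.2 != 0 -> dt c != 0.
Proof.
rewrite /dt /cb; case: eqP => [-> [//|h]|/eqP h _] /=.
  by rewrite mul0r sub0r mul1r oppr_eq0.
by rewrite mulr1 mul0r subr0.
Qed.

Definition pt := ((K * K) * (K * K))%type.

Definition psi_t (P : pt) : 4.-tuple S :=
  [tuple lin2 P.1.1 (cb P.1).1 iX0 iX1; lin2 P.1.2 (cb P.1).2 iX0 iX1;
         lin2 P.2.1 (cb P.2).1 iY0 iY1; lin2 P.2.2 (cb P.2).2 iY0 iY1].

Definition phi_t (P : pt) : 4.-tuple S :=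
  [tuple lin2 ((cb P.1).2 / dt P.1) (- (cb P.1).1 / dt P.1) iX0 iX1;
         lin2 (- P.1.2 / dt P.1) (P.1.1 / dt P.1) iX0 iX1;
         lin2 ((cb P.2).2 / dt P.2) (- (cb P.2).1 / dt P.2) iY0 iY1;
         lin2 (- P.2.2 / dt P.2) (P.2.1 / dt P.2) iY0 iY1].

Definition good (P : pt) := (P.1.1 != 0 \/ P.1.2 != 0) /\ (P.2.1 != 0 \/ P.2.2 != 0).

Lemma phi_psi (P : pt) f : good P -> (f \mPo psi_t P) \mPo phi_t P = f.
Proof.
case=> /dt_neq0 h1 /dt_neq0 h2.
rewrite comp_comp -[RHS]comp_mpoly_id; congr (_ \mPo _).
move: h1 h2; case: P => [[a0 a1] [b0 b1]]; rewrite /phi_t /psi_t /dt /=.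
case: (cb (a0, a1)) => x1 x2; case: (cb (b0, b1)) => y1 y2 /= h1 h2.
apply: tuple4_eq; rewrite !tnth_mktuple /= lin2_comp /= lin2_comb.
- by apply: (etrans _ (lin2_X0 _ _)); apply: lin2_eq; field.
- by apply: (etrans _ (lin2_X1 _ _)); apply: lin2_eq; field.
- by apply: (etrans _ (lin2_X0 _ _)); apply: lin2_eq; field.
- by apply: (etrans _ (lin2_X1 _ _)); apply: lin2_eq; field.
Qed.

Lemma psi_phi (P : pt) f : good P -> (f \mPo phi_t P) \mPo psi_t P = f.
Proof.
case=> /dt_neq0 h1 /dt_neq0 h2.
rewrite comp_comp -[RHS]comp_mpoly_id; congr (_ \mPo _).
move: h1 h2; case: P => [[a0 a1] [b0 b1]]; rewrite /phi_t /psi_t /dt /=.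
case: (cb (a0, a1)) => x1 x2; case: (cb (b0, b1)) => y1 y2 /= h1 h2.
apply: tuple4_eq; rewrite !tnth_mktuple /= lin2_comp /= lin2_comb.
- by apply: (etrans _ (lin2_X0 _ _)); apply: lin2_eq; field.
- by apply: (etrans _ (lin2_X1 _ _)); apply: lin2_eq; field.
- by apply: (etrans _ (lin2_X0 _ _)); apply: lin2_eq; field.
- by apply: (etrans _ (lin2_X1 _ _)); apply: lin2_eq; field.
Qed.


Lemma prod4 (F : 'I_4 -> S) : \prod_(i < 4) F i = F iX0 * F iX1 * F iY0 * F iY1.
Proof.
rewrite !big_ord_recl big_ord0 mulr1 !mulrA.
by congr (F _ * F _ * F _ * F _); apply: val_inj.
Qed.

Lemma sum4 (F : 'I_4 -> nat) : (\sum_(i < 4) F i = F iX0 + F iX1 + F iY0 + F iY1)%N.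
Proof.
rewrite !big_ord_recl big_ord0 addn0 !addnA.
by congr (F _ + F _ + F _ + F _)%N; apply: val_inj.
Qed.

Lemma gen1E (P : pt) : (pt_gens P)`_0 = lin2 P.1.2 (- P.1.1) iX0 iX1.
Proof. by rewrite /= /lin2 scaleNr. Qed.

Lemma gen2E (P : pt) : (pt_gens P)`_1 = lin2 P.2.2 (- P.2.1) iY0 iY1.
Proof. by rewrite /= /lin2 scaleNr. Qed.

Lemma psi_gen1 (P : pt) : (pt_gens P)`_0 \mPo psi_t P = (- dt P.1) *: 'X_iX1.
Proof.
rewrite gen1E lin2_comp /= lin2_comb -[RHS]add0r -(scale0r 'X_iX0) /dt.
by congr (_ *: _ + _ *: _); ring.
Qed.

Lemma psi_gen2 (P : pt) : (pt_gens P)`_1 \mPo psi_t P = (- dt P.2) *: 'X_iY1.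
Proof.
rewrite gen2E lin2_comp /= lin2_comb -[RHS]add0r -(scale0r 'X_iY0) /dt.
by congr (_ *: _ + _ *: _); ring.
Qed.

Lemma phi_X1 (P : pt) : good P -> 'X_iX1 \mPo phi_t P = (- (dt P.1)^-1) *: (pt_gens P)`_0.
Proof.
case=> /dt_neq0 h1 _; rewrite comp_mpolyXU gen1E /= /lin2 scalerDr !scalerA.
by congr (_ *: _ + _ *: _); field.
Qed.

Lemma phi_Y1 (P : pt) : good P -> 'X_iY1 \mPo phi_t P = (- (dt P.2)^-1) *: (pt_gens P)`_1.
Proof.
case=> _ /dt_neq0 h1; rewrite comp_mpolyXU gen2E /= /lin2 scalerDr !scalerA.
by congr (_ *: _ + _ *: _); field.
Qed.

Lemma ordX_ZX1 c : ordX (c *: 'X_iX1) 1.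
Proof. by move=> e /msuppZ_le /mem_msuppXP <-; rewrite !mnm1E. Qed.

Lemma ordX_ZY1 c : ordX (c *: 'X_iY1) 1.
Proof. by move=> e /msuppZ_le /mem_msuppXP <-; rewrite !mnm1E. Qed.

Lemma pow_gensS G k g : g \in pow_gens G k.+1 ->
  exists g1 g2, [/\ g1 \in G, g2 \in pow_gens G k & g = g1 * g2].
Proof. by move=> /allpairsP [[g1 g2] /= [g1in g2in ->]]; exists g1, g2. Qed.

Lemma ordX_pow_gens (P : pt) k g : g \in pow_gens (pt_gens P) k -> ordX (g \mPo psi_t P) k.
Proof.
elim: k g => [|k IH] g.
  by move=> _ e _.
move=> /pow_gensS [g1 [g2 [g1in g2in ->]]].
rewrite rmorphM /=; apply: (@ordXM _ _ 1 k); last exact: IH.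
move: g1in; rewrite !inE => /orP [/eqP ->|/eqP ->].
  by have := psi_gen1 P; rewrite /= => ->; apply: ordX_ZX1.
by have := psi_gen2 P; rewrite /= => ->; apply: ordX_ZY1.
Qed.

Lemma F1a (P : pt) k f : in_pt_pow P k f -> ordX (f \mPo psi_t P) k.
Proof.
move=> /in_idealP [c ->].
rewrite (big_morph _ (comp_mpolyD (psi_t P)) (comp_mpoly0 (psi_t P))).
apply: ordX_sum => i _; rewrite rmorphM /=; apply: ordXMl.
by apply: ordX_pow_gens; apply: mem_nth.
Qed.

Lemma gen_pow1 (P : pt) g : g \in pt_gens P -> in_pt_pow P 1 g.
Proof.
move=> gin; rewrite /in_pt_pow -[g]mulr1; apply: in_ideal_mem.
move: gin; rewrite !inE => /orP [/eqP ->|/eqP ->]; by rewrite /= ?inE eqxx ?orbT.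
Qed.

Lemma pow0_all (P : pt) f : in_pt_pow P 0 f.
Proof. by rewrite -[f]mulr1; apply: in_idealMl; apply: in_ideal_mem; rewrite inE. Qed.

Lemma mul4 (a b c d : S) : a * b * c * d = (a * c) * (b * d).
Proof. by rewrite mulrACA -!mulrA; congr (_ * _); rewrite mulrCA. Qed.

Lemma F1b (P : pt) k f : good P -> ordX (f \mPo psi_t P) k -> in_pt_pow P k f.
Proof.
move=> gP hord; rewrite -(phi_psi f gP) comp_mpolyEX big_seq.
apply: in_ideal_sum => e ein; apply: in_idealZ.
have he := hord e ein.
have hB : in_pt_pow P 1 (tnth (phi_t P) iX1).
  rewrite (tnth_nth 0) -comp_mpolyXU phi_X1 //; apply: in_idealZ.
  by apply: gen_pow1; rewrite !inE eqxx.
have hD : in_pt_pow P 1 (tnth (phi_t P) iY1).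
  rewrite (tnth_nth 0) -comp_mpolyXU phi_Y1 //; apply: in_idealZ.
  by apply: gen_pow1; rewrite !inE eqxx ?orbT.
rewrite comp_mpolyX prod4 mul4; apply: in_idealMl.
apply: (pow_ideal_le he).
by have := pow_idealM (pow_ideal_Xn (e iX1) hB) (pow_ideal_Xn (e iY1) hD); rewrite !muln1.
Qed.

Lemma F1 (P : pt) k f : good P -> in_pt_pow P k f <-> ordX (f \mPo psi_t P) k.
Proof. by move=> gP; split; [apply: F1a | apply: F1b]. Qed.


Lemma quot_dim_fin (I : finType) (A : {pred I}) (J : S -> Prop) (T : I -> S -> K)
    (F : I -> S) a b :
  (forall k f g, T k (f + g) = T k f + T k g) ->
  (forall k c f, T k (c *: f) = c * T k f) ->
  (forall k, k \in A -> bihom (F k) a b) ->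
  (forall k k', k \in A -> k' \in A -> T k' (F k) = (k' == k)%:R) ->
  (forall f, J f -> forall k, k \in A -> T k f = 0) ->
  (forall f, bihom f a b -> (forall k, k \in A -> T k f = 0) -> J f) ->
  quot_dim J a b #|A|.
Proof.
move=> TD TZ hF hT hJ1 hJ2.
have T0 k : T k 0 = 0 by rewrite -(scale0r 0) TZ mul0r.
have TB k f g : T k (f - g) = T k f - T k g.
  by rewrite -scaleN1r TD TZ mulN1r.
have TS k (s : seq 'I_#|A|) (c : 'I_#|A| -> K) :
    T k (\sum_(i <- s) c i *: F (enum_val i)) = \sum_(i <- s) c i * T k (F (enum_val i)).
  by rewrite (big_morph _ (TD k) (T0 k)); apply: eq_bigr => i _; rewrite TZ.
exists (fun i => F (enum_val i)); split; [|split].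
- by move=> i; apply: hF; apply: enum_valP.
- move=> c hc i; have := hJ1 _ hc (enum_val i) (enum_valP i).
  rewrite TS (bigD1 i) //= hT ?enum_valP // eqxx mulr1 big1 ?addr0 // => j ji.
  by rewrite hT ?enum_valP // (inj_eq enum_val_inj) eq_sym (negbTE ji) mulr0.
- move=> f hf; exists (fun i => T (enum_val i) f); apply: hJ2.
    apply: bihomB => //; apply: bihom_sum => i _; apply: bihomZ; apply: hF.
    exact: enum_valP.
  move=> k kA; rewrite TB TS (bigD1 (enum_rank_in kA k)) //= enum_rankK_in //.
  rewrite hT ?enum_valP // eqxx mulr1 big1 ?addr0 ?subrr // => j jk.
  rewrite hT ?enum_valP //; case: eqP => [ek|]; last by rewrite mulr0.
  by move: jk; rewrite -(inj_eq enum_val_inj) enum_rankK_in // -ek eqxx.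
Qed.


Lemma ord4_ind (Pr : 'I_4 -> Prop) : Pr iX0 -> Pr iX1 -> Pr iY0 -> Pr iY1 -> forall i, Pr i.
Proof.
move=> h0 h1 h2 h3 -[[|[|[|[|n]]]] Hi] //.
- by have -> : Ordinal Hi = iX0 by apply: val_inj.
- by have -> : Ordinal Hi = iX1 by apply: val_inj.
- by have -> : Ordinal Hi = iY0 by apply: val_inj.
- by have -> : Ordinal Hi = iY1 by apply: val_inj.
Qed.

Definition mon (A B C E : nat) : 'X_{1..4} := [multinom nth 0%N [:: A; B; C; E] i | i < 4].

Lemma monX0 A B C E : mon A B C E iX0 = A. Proof. by rewrite mnmE. Qed.
Lemma monX1 A B C E : mon A B C E iX1 = B. Proof. by rewrite mnmE. Qed.
Lemma monY0 A B C E : mon A B C E iY0 = C. Proof. by rewrite mnmE. Qed.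
Lemma monY1 A B C E : mon A B C E iY1 = E. Proof. by rewrite mnmE. Qed.

Lemma monE (e : 'X_{1..4}) : e = mon (e iX0) (e iX1) (e iY0) (e iY1).
Proof.
apply/mnmP; apply: ord4_ind; by rewrite ?monX0 ?monX1 ?monY0 ?monY1.
Qed.

Lemma mon_eq (e e' : 'X_{1..4}) : e iX0 = e' iX0 -> e iX1 = e' iX1 ->
  e iY0 = e' iY0 -> e iY1 = e' iY1 -> e = e'.
Proof. by move=> h0 h1 h2 h3; rewrite [e]monE [e']monE h0 h1 h2 h3. Qed.

Lemma bihom_lin2X u v : bihom (lin2 u v iX0 iX1) 1 0.
Proof.
apply: bihomD; apply: bihomZ.
  by apply: (bihomW (@bihomXm _)); rewrite !mnm1E.
by apply: (bihomW (@bihomXm _)); rewrite !mnm1E.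
Qed.

Lemma bihom_lin2Y u v : bihom (lin2 u v iY0 iY1) 0 1.
Proof.
apply: bihomD; apply: bihomZ.
  by apply: (bihomW (@bihomXm _)); rewrite !mnm1E.
by apply: (bihomW (@bihomXm _)); rewrite !mnm1E.
Qed.

Lemma comp_bihom (lq : 4.-tuple S) f a b :
  bihom (tnth lq iX0) 1 0 -> bihom (tnth lq iX1) 1 0 ->
  bihom (tnth lq iY0) 0 1 -> bihom (tnth lq iY1) 0 1 ->
  bihom f a b -> bihom (f \mPo lq) a b.
Proof.
move=> h0 h1 h2 h3 hf; rewrite comp_mpolyEX big_seq.
apply: bihom_sum => e ein; apply: bihomZ; rewrite comp_mpolyX prod4.
have [ha hb] := hf e ein.
apply: (bihomW (bihomM (bihomM (bihomM (bihomXn (n:=e iX0) h0) (bihomXn (n:=e iX1) h1))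
   (bihomXn (n:=e iY0) h2)) (bihomXn (n:=e iY1) h3))); lia.
Qed.

Lemma psi_bihom (P : pt) f a b : bihom f a b -> bihom (f \mPo psi_t P) a b.
Proof.
by apply: comp_bihom; rewrite /=;
  (apply: bihom_lin2X || apply: bihom_lin2Y).
Qed.

Lemma phi_bihom (P : pt) f a b : bihom f a b -> bihom (f \mPo phi_t P) a b.
Proof.
by apply: comp_bihom; rewrite /=;
  (apply: bihom_lin2X || apply: bihom_lin2Y).
Qed.

Lemma prod4R (R : comRingType) (F : 'I_4 -> R) :
  \prod_(i < 4) F i = F iX0 * F iX1 * F iY0 * F iY1.
Proof.
rewrite !big_ord_recl big_ord0 mulr1 !mulrA.
by congr (F _ * F _ * F _ * F _); apply: val_inj.
Qed.

Definition v10 (i : 'I_4) : K := if (i == iX0) || (i == iY0) then 1 else 0.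

Lemma meval_bihom g A B : bihom g A B -> meval v10 g = g@_(mon A 0 B 0).
Proof.
move=> hg; rewrite mevalE [in RHS](mpolyE g).
rewrite raddf_sum /= !big_seq; apply: eq_bigr => e ein.
rewrite mcoeffZ mcoeffX prod4R /v10 /= !expr1n !mul1r mulr1 !expr0n -natrM.
congr (_ * _%:R); have [h1 h2] := hg e ein.
rewrite mulnb; congr (nat_of_bool _); apply/idP/idP.
  case/andP => /eqP e1 /eqP e3; apply/eqP; apply: mon_eq;
  rewrite ?monX0 ?monX1 ?monY0 ?monY1; lia.
by move/eqP ->; rewrite monX1 monY1.
Qed.


Definition Tf (P : pt) (a b s u : nat) (f : S) : K :=
  (f \mPo psi_t P)@_(mon (a - s) s (b - u) u).

Lemma TfD P a b s u f g : Tf P a b s u (f + g) = Tf P a b s u f + Tf P a b s u g.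
Proof. by rewrite /Tf comp_mpolyD mcoeffD. Qed.

Lemma TfZ P a b s u c f : Tf P a b s u (c *: f) = c * Tf P a b s u f.
Proof. by rewrite /Tf comp_mpolyZ mcoeffZ. Qed.

Lemma T_ideal P k a b s u f : (s + u < k)%N -> in_pt_pow P k f -> Tf P a b s u f = 0.
Proof.
move=> hsu /F1a ho; rewrite /Tf; apply/eqP; rewrite mcoeff_eq0; apply/negP => /ho.
by rewrite monX1 monY1 leqNgt hsu.
Qed.

Lemma T_pow P k a b f : good P -> bihom f a b ->
  (forall s u, (s + u < k)%N -> Tf P a b s u f = 0) -> in_pt_pow P k f.
Proof.
move=> gP hf hT; apply/F1 => // e ein.
have [h1 h2] := psi_bihom (P:=P) hf ein.
rewrite leqNgt; apply/negP => hlt; move: ein; rewrite mcoeff_msupp.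
have -> : e = mon (a - e iX1) (e iX1) (b - e iY1) (e iY1).
  by apply: mon_eq; rewrite ?monX0 ?monX1 ?monY0 ?monY1 //; lia.
by rewrite -/(Tf P a b _ _ f) hT ?eqxx.
Qed.

Lemma coefXmM (e1 : 'X_{1..4}) (H : S) (tg : 'X_{1..4}) :
  ~~ (e1 <= tg)%MM -> ('X_[e1] * H)@_tg = 0.
Proof.
move=> hn; apply/eqP; rewrite mcoeff_eq0 mulrC (perm_mem (msuppMX _ _)).
apply/negP => /mapP [e' _ he]; move: hn; rewrite he.
by apply/negP/negPn/mnm_lepP => i; rewrite mnmDE leq_addr.
Qed.

End Work.

Unset Implicit Arguments. Set Strict Implicit.

Section Main.
Variable K : fieldType.
Local Notation S := {mpoly K[4]}.
Variables (r t : nat) (Q : 'I_r -> K * K) (R : 'I_t -> K * K).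
Hypothesis HQ0 : forall i, (Q i).1 != 0 \/ (Q i).2 != 0.
Hypothesis HR0 : forall j, (R j).1 != 0 \/ (R j).2 != 0.
Hypothesis HQd : forall i i', i != i' -> (Q i).1 * (Q i').2 != (Q i).2 * (Q i').1.
Hypothesis HRd : forall j j', j != j' -> (R j).1 * (R j').2 != (R j).2 * (R j').1.
Variable D : {set 'I_r * 'I_t}.
Variable m : 'I_r -> 'I_t -> nat.

Definition Pt (k : 'I_r) (l : 'I_t) : pt K := (Q k, R l).

Lemma goodPt k l : good (Pt k l).
Proof. by split; [apply: HQ0 | apply: HR0]. Qed.

Definition Mx := (\max_(k < r) \max_(l < t) m k l)%N.

Lemma m_le k l : (m k l <= Mx)%N.
Proof.
apply: (leq_trans _ (leq_bigmax k)); exact: (leq_bigmax (F := fun l => m k l) l).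
Qed.

Definition LX (k : 'I_r) : S := (Q k).2 *: 'X_iX0 - (Q k).1 *: 'X_iX1.
Definition MY (l : 'I_t) : S := (R l).2 *: 'X_iY0 - (R l).1 *: 'X_iY1.

Lemma LX_gen k l : LX k \in pt_gens (Pt k l).
Proof. by rewrite !inE eqxx. Qed.

Lemma MY_gen k l : MY l \in pt_gens (Pt k l).
Proof. by rewrite !inE eqxx orbT. Qed.

Lemma LX_psi k l : LX k \mPo psi_t (Pt k l) = (- dt (Q k)) *: 'X_iX1.
Proof. exact: (psi_gen1 (Pt k l)). Qed.

Lemma MY_psi k l : MY l \mPo psi_t (Pt k l) = (- dt (R l)) *: 'X_iY1.
Proof. exact: (psi_gen2 (Pt k l)). Qed.

Lemma lin2_meval u v : meval (@v10 K) (lin2 u v iX0 iX1) = u.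
Proof. by rewrite /lin2 mevalD !mevalZ !mevalXU /v10 /= mulr1 mulr0 addr0. Qed.

Lemma lin2_mevalY u v : meval (@v10 K) (lin2 u v iY0 iY1) = u.
Proof. by rewrite /lin2 mevalD !mevalZ !mevalXU /v10 /= mulr1 mulr0 addr0. Qed.

Lemma LX_meval k k' l : k' != k ->
  meval (@v10 K) (LX k' \mPo psi_t (Pt k l)) != 0.
Proof.
move=> nk; have -> : LX k' = (pt_gens (Pt k' l))`_0 by [].
rewrite gen1E lin2_comp /= lin2_comb lin2_meval /=.
have hk : k != k' by rewrite eq_sym.
have := HQd _ _ hk; apply: contraNneq => h.
by rewrite -subr_eq0 -h; apply/eqP; ring.
Qed.

Lemma MY_meval k l l' : l' != l ->
  meval (@v10 K) (MY l' \mPo psi_t (Pt k l)) != 0.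
Proof.
move=> nl; have -> : MY l' = (pt_gens (Pt k l'))`_1 by [].
rewrite gen2E lin2_comp /= lin2_comb lin2_mevalY /=.
have hl : l != l' by rewrite eq_sym.
have := HRd _ _ hl; apply: contraNneq => h.
by rewrite -subr_eq0 -h; apply/eqP; ring.
Qed.


Definition ex (k : 'I_r) := (\sum_(k' < r | k' != k) Mx)%N.
Definition ey (l : 'I_t) := (\sum_(l' < t | l' != l) Mx)%N.
Definition WX (k : 'I_r) : S := \prod_(k' < r | k' != k) LX k' ^+ Mx.
Definition WY (l : 'I_t) : S := \prod_(l' < t | l' != l) MY l' ^+ Mx.
Definition phX k l : S := tnth (phi_t (Pt k l)) iX0.
Definition phY k l : S := tnth (phi_t (Pt k l)) iY0.

Definition Gen (a b : nat) k l (s u : nat) : S :=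
  LX k ^+ s * MY l ^+ u * WX k * WY l * phX k l ^+ (a - s - ex k) * phY k l ^+ (b - u - ey l).

Lemma LX_lin2 k : LX k = lin2 (Q k).2 (- (Q k).1) iX0 iX1.
Proof. by rewrite /LX /lin2 scaleNr. Qed.

Lemma MY_lin2 l : MY l = lin2 (R l).2 (- (R l).1) iY0 iY1.
Proof. by rewrite /MY /lin2 scaleNr. Qed.

Lemma WX_bihom k : bihom (WX k) (ex k) 0.
Proof.
apply: (bihomW (bihom_prod (da := fun _ => (Mx * 1)%N) (db := fun _ => (Mx * 0)%N) _)).
- by move=> k' _; apply: bihomXn; rewrite LX_lin2; apply: bihom_lin2X.
- by rewrite /ex; apply: eq_bigr => k' _; rewrite muln1.
- by rewrite big1 // => k' _; rewrite muln0.
Qed.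

Lemma WY_bihom l : bihom (WY l) 0 (ey l).
Proof.
apply: (bihomW (bihom_prod (da := fun _ => (Mx * 0)%N) (db := fun _ => (Mx * 1)%N) _)).
- by move=> l' _; apply: bihomXn; rewrite MY_lin2; apply: bihom_lin2Y.
- by rewrite big1 // => k' _; rewrite muln0.
- by rewrite /ey; apply: eq_bigr => k' _; rewrite muln1.
Qed.

Lemma Gen_bihom a b k l s u : (s + ex k <= a)%N -> (u + ey l <= b)%N ->
  bihom (Gen a b k l s u) a b.
Proof.
move=> ha hb.
have h1 := bihomXn (n := s) (bihom_lin2X (u:=(Q k).2) (v:=- (Q k).1)).
have h2 := bihomXn (n := u) (bihom_lin2Y (u:=(R l).2) (v:=- (R l).1)).
have h5 : bihom (phX k l ^+ (a - s - ex k)) ((a - s - ex k) * 1) ((a - s - ex k) * 0).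
  by apply: bihomXn; apply: bihom_lin2X.
have h6 : bihom (phY k l ^+ (b - u - ey l)) ((b - u - ey l) * 0) ((b - u - ey l) * 1).
  by apply: bihomXn; apply: bihom_lin2Y.
rewrite -LX_lin2 in h1; rewrite -MY_lin2 in h2.
rewrite /Gen; apply: (bihomW (bihomM (bihomM (bihomM (bihomM (bihomM h1 h2) (WX_bihom k)) (WY_bihom l)) h5) h6)); lia.
Qed.

Lemma in_pt_pow_Mr (P : pt K) k (f x : S) : in_pt_pow P k f -> in_pt_pow P k (f * x).
Proof. exact: in_idealMr. Qed.

Lemma in_pt_pow_Ml (P : pt K) k (f x : S) : in_pt_pow P k f -> in_pt_pow P k (x * f).
Proof. exact: in_idealMl. Qed.

Lemma Gen_other a b k l s u k' l' : (k', l') != (k, l) ->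
  in_pt_pow (Pt k' l') (m k' l') (Gen a b k l s u).
Proof.
move=> hne; rewrite /Gen; apply: in_pt_pow_Mr; apply: in_pt_pow_Mr.
have hpow (g : S) : g \in pt_gens (Pt k' l') -> in_pt_pow (Pt k' l') (m k' l') (g ^+ Mx).
  move=> gin; apply: (pow_ideal_le (m_le k' l')).
  by have := pow_ideal_Xn Mx (gen_pow1 gin); rewrite muln1.
case: (eqVneq k' k) => [ek|nk].
  have nl : l' != l by move: hne; rewrite ek xpair_eqE eqxx.
  apply: in_pt_pow_Ml; rewrite /WY (bigD1 l') //=; apply: in_pt_pow_Mr.
  exact: hpow (MY_gen k' l').
apply: in_pt_pow_Mr; apply: in_pt_pow_Ml; rewrite /WX (bigD1 k') //=; apply: in_pt_pow_Mr.
exact: hpow (LX_gen k' l').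
Qed.


Local Notation psi k l := (psi_t (Pt k l)).

Lemma phX_psi k l : phX k l \mPo psi k l = 'X_iX0.
Proof. by rewrite /phX (tnth_nth 0) -comp_mpolyXU psi_phi //; apply: goodPt. Qed.

Lemma phY_psi k l : phY k l \mPo psi k l = 'X_iY0.
Proof. by rewrite /phY (tnth_nth 0) -comp_mpolyXU psi_phi //; apply: goodPt. Qed.

Definition e1 (s u : nat) : 'X_{1..4} := (U_(iX1) *+ s + U_(iY1) *+ u)%MM.

Lemma e1X0 s u : e1 s u iX0 = 0%N. Proof. by rewrite mnmDE !mulmnE !mnm1E. Qed.
Lemma e1X1 s u : e1 s u iX1 = s. Proof. rewrite mnmDE !mulmnE !mnm1E /=; lia. Qed.
Lemma e1Y0 s u : e1 s u iY0 = 0%N. Proof. by rewrite mnmDE !mulmnE !mnm1E. Qed.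
Lemma e1Y1 s u : e1 s u iY1 = u. Proof. rewrite mnmDE !mulmnE !mnm1E /=; lia. Qed.

Definition Hh a b k l s u : S :=
  (WX k \mPo psi k l) * (WY l \mPo psi k l) * 'X_iX0 ^+ (a - s - ex k) * 'X_iY0 ^+ (b - u - ey l).

Lemma Gen_psi a b k l s u :
  Gen a b k l s u \mPo psi k l =
  ((- dt (Q k)) ^+ s * (- dt (R l)) ^+ u) *: ('X_[e1 s u] * Hh a b k l s u).
Proof.
rewrite /Gen /Hh !rmorphM !rmorphXn /= LX_psi MY_psi phX_psi phY_psi.
rewrite /e1 mpolyXD -!mpolyXn !exprZn -!mul_mpolyC rmorphM /=.
ring.
Qed.


Lemma Tf_Gen_zero a b k l s u s' u' : ~~ ((s <= s') && (u <= u'))%N ->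
  Tf (Pt k l) a b s' u' (Gen a b k l s u) = 0.
Proof.
move=> hn; rewrite /Tf Gen_psi mcoeffZ coefXmM ?mulr0 //.
apply/negP => /mnm_lepP h; move: hn; have h1 := h iX1; have h3 := h iY1.
by rewrite e1X1 monX1 in h1; rewrite e1Y1 monY1 in h3; rewrite h1 h3.
Qed.

Lemma Hh_bihom a b k l s u : (s + ex k <= a)%N -> (u + ey l <= b)%N ->
  bihom (Hh a b k l s u) (a - s) (b - u).
Proof.
move=> ha hb; rewrite /Hh.
have hx : bihom ('X_iX0 : S) 1 0 by apply: (bihomW (@bihomXm _ _)); rewrite !mnm1E.
have hy : bihom ('X_iY0 : S) 0 1 by apply: (bihomW (@bihomXm _ _)); rewrite !mnm1E.
apply: (bihomW (bihomM (bihomM (bihomM (psi_bihom (P:=Pt k l) (WX_bihom k))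
  (psi_bihom (P:=Pt k l) (WY_bihom l)))
  (bihomXn (n:=a - s - ex k) hx)) (bihomXn (n:=b - u - ey l) hy))); lia.
Qed.

Lemma Hh_meval a b k l s u : meval (@v10 K) (Hh a b k l s u) != 0.
Proof.
rewrite /Hh !rmorphM !rmorphXn /= !mevalXU /v10 /= !expr1n !mulr1.
rewrite /WX /WY !rmorph_prod /=; apply: mulf_neq0.
  apply/prodf_neq0 => k' nk.
  by rewrite !rmorphXn /=; apply: expf_neq0; apply: LX_meval.
apply/prodf_neq0 => l' nl.
by rewrite !rmorphXn /=; apply: expf_neq0; apply: MY_meval.
Qed.

Lemma Tf_Gen_nz a b k l s u : (s + ex k <= a)%N -> (u + ey l <= b)%N ->
  Tf (Pt k l) a b s u (Gen a b k l s u) != 0.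
Proof.
move=> ha hb; rewrite /Tf Gen_psi mcoeffZ mulf_neq0 //.
  have [/dt_neq0 h1 /dt_neq0 h2] := goodPt k l.
  by rewrite mulf_neq0 // expf_neq0 // oppr_eq0.
have -> : mon (a - s) s (b - u) u = (e1 s u + mon (a - s) 0 (b - u) 0)%MM.
  by apply: mon_eq; rewrite !mnmDE !mulmnE !mnm1E ?monX0 ?monX1 ?monY0 ?monY1 /=; lia.
rewrite mulrC mcoeffMX -meval_bihom; first exact: Hh_meval.
exact: Hh_bihom.
Qed.


Local Notation Ix := ((('I_r * 'I_t) * ('I_Mx * 'I_Mx))%type).
Definition A0 : {pred Ix} := [pred x : Ix | (x.1 \in D) && (x.2.1 + x.2.2 < m x.1.1 x.1.2)%N].
Definition Tk a b (x : Ix) (f : S) : K := Tf (Pt x.1.1 x.1.2) a b x.2.1 x.2.2 f.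
Definition GenI a b (x : Ix) : S := Gen a b x.1.1 x.1.2 x.2.1 x.2.2.
Definition gap (x : Ix) := (m x.1.1 x.1.2 - (x.2.1 + x.2.2))%N.
Definition Nb := (r * Mx + t * Mx + Mx)%N.

Lemma TkD a b x f g : Tk a b x (f + g) = Tk a b x f + Tk a b x g.
Proof. exact: TfD. Qed.
Lemma TkZ a b x c f : Tk a b x (c *: f) = c * Tk a b x f.
Proof. exact: TfZ. Qed.
Lemma Tk0 a b x : Tk a b x 0 = 0.
Proof. by rewrite -(scale0r 0) TkZ mul0r. Qed.
Lemma TkB a b x f g : Tk a b x (f - g) = Tk a b x f - Tk a b x g.
Proof. by rewrite -scaleN1r TkD TkZ mulN1r. Qed.
Lemma Tk_sum a b x (I : Type) (s : seq I) (P : pred I) (F : I -> S) :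
  Tk a b x (\sum_(i <- s | P i) F i) = \sum_(i <- s | P i) Tk a b x (F i).
Proof. exact: (big_morph _ (TkD a b x) (Tk0 a b x)). Qed.

Lemma ex_le k : (ex k <= r * Mx)%N.
Proof.
have : (\sum_(k' < r | k' != k) Mx <= \sum_(k' < r) Mx)%N.
  by rewrite [X in (_ <= X)%N](bigD1 k) //= leq_addl.
by rewrite big_const_ord iter_addn_0 mulnC.
Qed.

Lemma ey_le l : (ey l <= t * Mx)%N.
Proof.
have : (\sum_(l' < t | l' != l) Mx <= \sum_(l' < t) Mx)%N.
  by rewrite [X in (_ <= X)%N](bigD1 l) //= leq_addl.
by rewrite big_const_ord iter_addn_0 mulnC.
Qed.

Lemma boundX a (x : Ix) : (Nb <= a)%N -> (x.2.1 + ex x.1.1 <= a)%N.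
Proof. have := ex_le x.1.1; have := ltn_ord x.2.1; rewrite /Nb; lia. Qed.

Lemma boundY b (x : Ix) : (Nb <= b)%N -> (x.2.2 + ey x.1.2 <= b)%N.
Proof. have := ey_le x.1.2; have := ltn_ord x.2.2; rewrite /Nb; lia. Qed.

Lemma key_tri a b (x z : Ix) : z \in A0 -> z != x -> Tk a b z (GenI a b x) != 0 ->
  (gap z < gap x)%N.
Proof.
case: x => [[k l] [s u]]; case: z => [[k' l'] [s' u']].
rewrite /A0 inE /= => /andP [zD zlt] nzx hT.
case: (eqVneq (k', l') (k, l)) => [[ek el]|nkl]; last first.
  by move: hT; rewrite /Tk /GenI /= (T_ideal a b zlt (Gen_other a b k l s u k' l' nkl)) eqxx.
subst k' l'.
case hsu: ((s <= s') && (u <= u'))%N; last first.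
  by move: hT; rewrite /Tk /GenI /= Tf_Gen_zero ?hsu ?eqxx.
move/andP: hsu => [h1 h2].
have : (s != s') || (u != u').
  apply: contraR nzx; rewrite negb_or !negbK => /andP [/eqP e1' /eqP e2'].
  by rewrite e1' e2'.
rewrite /gap /= => /orP [hne|hne].
  have : (s : nat) <> s' by move=> e; move/eqP: hne; apply; apply: val_inj.
  lia.
have : (u : nat) <> u' by move=> e; move/eqP: hne; apply; apply: val_inj.
lia.
Qed.


Lemma dual_basis a b : (Nb <= a)%N -> (Nb <= b)%N ->
  exists F : Ix -> S, forall x, x \in A0 ->
    bihom (F x) a b /\ forall y, y \in A0 -> Tk a b y (F x) = (y == x)%:R.
Proof.
move=> ha hb.
suff H : forall n x, x \in A0 -> (gap x <= n)%N -> exists F : S,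
    bihom F a b /\ forall y, y \in A0 -> Tk a b y F = (y == x)%:R.
  apply: (@fin_all_exists _ (fun _ => S) (fun x F => x \in A0 ->
    bihom F a b /\ forall y, y \in A0 -> Tk a b y F = (y == x)%:R)) => x.
  case xA: (x \in A0); last by exists 0.
  by have [F hF] := H _ x xA (leqnn _); exists F.
elim=> [|n IH] x xA hg.
  by move: xA hg; rewrite /A0 inE /gap => /andP [_ h]; lia.
have IH' : forall z, exists F : S, z \in A0 -> (gap z <= n)%N ->
    bihom F a b /\ forall y, y \in A0 -> Tk a b y F = (y == z)%:R.
  move=> z; case: (boolP ((z \in A0) && (gap z <= n)%N)) => [/andP [zA zg] | h].
    by have [F hF] := IH z zA zg; exists F.
  by exists 0 => zA zg; case/negP: h; rewrite zA zg.
have [Fz hFz] := @fin_all_exists _ (fun _ => S) (fun z F => z \in A0 -> (gap z <= n)%N ->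
    bihom F a b /\ forall y, y \in A0 -> Tk a b y F = (y == z)%:R) IH'.
set c := Tk a b x (GenI a b x).
have cnz : c != 0 by apply: Tf_Gen_nz; [apply: boundX | apply: boundY].
pose v z := c^-1 * Tk a b z (GenI a b x).
have vz z : z \in A0 -> z != x -> v z != 0 -> (gap z <= n)%N.
  move=> zA zx vnz; have h := key_tri a b x z zA zx; rewrite -ltnS.
  apply: leq_trans (h _) hg; move: vnz; rewrite /v mulf_eq0 negb_or.
  by case/andP.
exists (c^-1 *: GenI a b x - \sum_(z | (z \in A0) && (z != x)) v z *: Fz z); split.
  apply: bihomB; first by apply: bihomZ; apply: Gen_bihom; [apply: boundX | apply: boundY].
  apply: bihom_sum => z /andP [zA zx]; case: (eqVneq (v z) 0) => [->|vnz].
    by rewrite scale0r; apply: bihom0.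
  by apply: bihomZ; apply: (hFz z zA (vz z zA zx vnz)).1.
move=> y yA; rewrite TkB TkZ Tk_sum.
have -> : \sum_(z | (z \in A0) && (z != x)) Tk a b y (v z *: Fz z) =
          \sum_(z | (z \in A0) && (z != x)) v z * (y == z)%:R.
  apply: eq_bigr => z /andP [zA zx]; rewrite TkZ.
  case: (eqVneq (v z) 0) => [->|vnz]; first by rewrite !mul0r.
  by rewrite ((hFz z zA (vz z zA zx vnz)).2 y yA).
case: (eqVneq y x) => [->|yx].
  rewrite big1 ?subr0 ?mulVf ?eqxx //.
  by move=> z /andP [_ zx]; rewrite eq_sym (negbTE zx) mulr0.
rewrite (bigD1 y) /=; last by rewrite yA yx.
rewrite eqxx mulr1 big1 ?addr0 ?subrr ?eqxx //.
by move=> z /andP [_ zy]; rewrite eq_sym (negbTE zy) mulr0.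
Qed.


Definition IYp (f : S) := forall k l, (k, l) \in D -> in_pt_pow (Q k, R l) (m k l) f.

Lemma IY_T a b f x : IYp f -> x \in A0 -> Tk a b x f = 0.
Proof.
move=> hf; rewrite /A0 inE => /andP [xD xlt].
by apply: (T_ideal a b xlt); case: x xD xlt => [[k l] st] /= xD _; apply: hf.
Qed.

Lemma T_IY a b f : bihom f a b -> (forall x, x \in A0 -> Tk a b x f = 0) -> IYp f.
Proof.
move=> hf hT k l kD; apply: (T_pow (goodPt k l) hf) => s u hsu.
have hs : (s < Mx)%N by have := m_le k l; lia.
have hu : (u < Mx)%N by have := m_le k l; lia.
have := hT ((k, l), (Ordinal hs, Ordinal hu)); rewrite /A0 inE /= kD hsu; exact.
Qed.

Lemma IY_dim a b : (Nb <= a)%N -> (Nb <= b)%N -> quot_dim IYp a b #|A0|.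
Proof.
move=> ha hb; have [F hF] := dual_basis a b ha hb.
apply: (quot_dim_fin (T := Tk a b) (F := F)).
- exact: TkD.
- exact: TkZ.
- by move=> k kA; apply: (hF k kA).1.
- by move=> k k' kA k'A; apply: (hF k kA).2.
- by move=> f hf k kA; apply: IY_T.
- exact: T_IY.
Qed.


Lemma cnt_lt c n : (\sum_(u < n) (u < c)%N)%N = minn c n.
Proof.
elim: n => [|n IH]; first by rewrite big_ord0 minn0.
rewrite big_ord_recr /= IH; case: (ltnP n c) => h; lia.
Qed.

Lemma cnt2 M n : (M <= n)%N ->
  (\sum_(s < n) \sum_(u < n) (s + u < M)%N)%N = 'C(M.+1, 2).
Proof.
have inner M0 s : (\sum_(u < n) (s + u < M0)%N)%N = minn (M0 - s) n.
  by rewrite -cnt_lt; apply: eq_bigr => u _; rewrite ltn_subRL.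
elim: M => [|M IH] hM.
  by rewrite big1 // => s _; rewrite inner sub0n min0n.
rewrite (eq_bigr (fun s : 'I_n => (M - s) + (s < M.+1))%N); last first.
  move=> s _; rewrite inner; case: (leqP s M) => h; lia.
rewrite big_split /= cnt_lt (binS M.+1 1) bin1 -IH ?(ltnW hM) //.
congr (_ + _)%N; last by lia.
by apply: eq_bigr => s _; rewrite inner; lia.
Qed.

Lemma card_A0 : #|A0| = (\sum_(p in D) 'C(m p.1 p.2 + 1, 2))%N.
Proof.
rewrite -sum1_card big_mkcond /=.
rewrite (eq_bigr (fun x : Ix => (fun p st => if (p, st) \in A0 then 1 else 0)%N x.1 x.2));
  last by case.
rewrite -(pair_bigA _ (fun p st => if (p, st) \in A0 then 1 else 0)%N) /= [RHS]big_mkcond /=; apply: eq_bigr => p _.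
case pD: (p \in D); last first.
  by rewrite big1 // => st _; rewrite /A0 inE /= pD.
rewrite addn1 -(cnt2 _ _ (m_le p.1 p.2)); symmetry.
etransitivity; first exact: (pair_bigA _ (fun (s u : 'I_Mx) => nat_of_bool (s + u < m p.1 p.2)%N)).
apply: eq_bigr => -[s u] _.
by rewrite /A0 inE /= pD.
Qed.


Section WithG.
Variables (i : 'I_r) (j : 'I_t) (G : S) (a0 b0 : nat).
Hypothesis Hij : (i, j) \in D.
Hypothesis HGhom : bihom G a0 b0.
Hypothesis HG1 : in_pt_pow (Q i, R j) (m i j - 1) G.
Hypothesis HG2 : ~ in_pt_pow (Q i, R j) (m i j) G.
Hypothesis HG3 : forall k l, (k, l) \in D -> (k, l) != (i, j) -> in_pt_pow (Q k, R l) (m k l) G.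
Hypothesis Hm : (0 < m i j)%N.

Local Notation P0 := (Pt i j).
Local Notation psi0 := (psi_t (Pt i j)).

Lemma ordX_all (f : S) k : ordX f k <-> all (fun e : 'X_{1..4} => k <= e iX1 + e iY1)%N (msupp f).
Proof. by split => [h|/allP h]; [apply/allP => e /h | move=> e /h]. Qed.

Lemma e0_ex : exists2 e0, e0 \in msupp (G \mPo psi0) & (e0 iX1 + e0 iY1 = m i j - 1)%N.
Proof.
have h1 := F1a HG1.
have h2 : ~ ordX (G \mPo psi0) (m i j) by move=> h; apply: HG2; apply: F1b => //; apply: goodPt.
move/ordX_all: h2 => /negP; rewrite -has_predC => /hasP [e ein /= hlt].
by exists e => //; have := h1 e ein; lia.
Qed.


Definition mono0 a b := mon (a - a0) 0 (b - b0) 0.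
Definition h0 a b : S := 'X_[mono0 a b] \mPo phi_t P0.

Lemma T_hG a b y h' : y \in A0 -> (h' \mPo psi0)@_(mono0 a b) = 0 ->
  Tk a b y (h' * G) = 0.
Proof.
case: y => [[k l] [s u]]; rewrite /A0 inE /= => /andP [kD hlt] hc.
case: (eqVneq (k, l) (i, j)) => [[ek el]|ne]; last first.
  rewrite /Tk /=; apply: (T_ideal a b hlt); apply: in_pt_pow_Ml; exact: HG3.
subst k l; rewrite /Tk /Tf /= rmorphM /=.
have hG := F1a HG1.
case: (ltnP (s + u) (m i j - 1)) => hsu.
  apply/eqP; rewrite mcoeff_eq0; apply/negP => /(ordXMl (f := h' \mPo psi0) hG).
  by rewrite monX1 monY1; lia.
have hsu' : (s + u = m i j - 1)%N by lia.
apply/eqP; rewrite mcoeff_eq0; apply/negP => /msuppM_le /allpairsP [[e' e''] /= [e'in e''in he]].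
have [hb1 hb2] := psi_bihom (P := P0) HGhom e''in.
have ho := hG e'' e''in.
have c0 := congr1 (fun e : 'X_{1..4} => e iX0) he.
have c1 := congr1 (fun e : 'X_{1..4} => e iX1) he.
have c2 := congr1 (fun e : 'X_{1..4} => e iY0) he.
have c3 := congr1 (fun e : 'X_{1..4} => e iY1) he.
rewrite /= !mnmDE ?monX0 ?monX1 ?monY0 ?monY1 in c0 c1 c2 c3.
have E : e' = mono0 a b.
  by apply: mon_eq; rewrite /mono0 ?monX0 ?monX1 ?monY0 ?monY1; lia.
by move: e'in; rewrite E mcoeff_msupp hc eqxx.
Qed.

Lemma psi_h0 a b : h0 a b \mPo psi0 = 'X_[mono0 a b].
Proof. by rewrite /h0 psi_phi //; apply: goodPt. Qed.

Lemma hw a b y h : y \in A0 ->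
  Tk a b y (h * G) = (h \mPo psi0)@_(mono0 a b) * Tk a b y (h0 a b * G).
Proof.
move=> yA; set c := (h \mPo psi0)@_(mono0 a b).
have -> : h * G = (h - c *: h0 a b) * G + c *: (h0 a b * G).
  by rewrite mulrBl scalerAl subrK.
rewrite TkD TkZ T_hG ?add0r //.
by rewrite rmorphB /= comp_mpolyZ mcoeffB mcoeffZ psi_h0 mcoeffX eqxx mulr1 subrr.
Qed.

Definition Jp (f : S) := exists g h, IYp g /\ f = g + h * G.

Lemma J_dim a b : (Nb + a0 <= a)%N -> (Nb + b0 <= b)%N -> quot_dim Jp a b (#|A0| - 1).
Proof.
move=> ha hb.
have [e0 e0in he0] := e0_ex.
have [hb1 hb2] := psi_bihom (P := P0) HGhom e0in.
have hMx := m_le i j.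
have hs0 : (e0 iX1 < Mx)%N by lia.
have ht0 : (e0 iY1 < Mx)%N by lia.
pose k0 : Ix := ((i, j), (Ordinal hs0, Ordinal ht0)).
have k0A : k0 \in A0 by rewrite /A0 inE /= Hij /=; lia.
pose w y := Tk a b y (h0 a b * G).
have wnz : w k0 != 0.
  rewrite /w /Tk /Tf /= rmorphM /= psi_h0.
  have -> : mon (a - e0 iX1) (e0 iX1) (b - e0 iY1) (e0 iY1) = (mono0 a b + e0)%MM.
    by apply: mon_eq; rewrite !mnmDE /mono0 ?monX0 ?monX1 ?monY0 ?monY1; lia.
  by rewrite mulrC mcoeffMX -mcoeff_msupp.
have [F hF] := dual_basis a b (leq_trans (leq_addr _ _) ha) (leq_trans (leq_addr _ _) hb).
have h0b : bihom (h0 a b) (a - a0) (b - b0).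
  apply: phi_bihom; apply: (bihomW (@bihomXm _ _)); rewrite /mono0 ?monX0 ?monX1 ?monY0 ?monY1; lia.
have hGb : bihom (h0 a b * G) a b by apply: (bihomW (bihomM h0b HGhom)); lia.
rewrite (cardD1 k0 A0) k0A add1n subn1 /=.
apply: (quot_dim_fin (A := [predD1 A0 & k0])
  (T := fun y f => Tk a b y f - w y / w k0 * Tk a b k0 f) (F := F)).
- by move=> y f g; rewrite !TkD; ring.
- by move=> y c f; rewrite !TkZ; ring.
- by move=> y; rewrite inE => /andP [_ yA]; apply: (hF y yA).1.
- move=> y y'; rewrite !inE => /andP [yk yA] /andP [y'k y'A].
  by rewrite !(hF y yA).2 // (eq_sym k0 y) (negbTE yk) mulr0 subr0.
- move=> f [g [h [hg ->]]] y; rewrite inE => /andP [_ yA].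
  rewrite !TkD (IY_T a b g y hg yA) (IY_T a b g k0 hg k0A) !add0r (hw a b y h yA) (hw a b k0 h k0A); rewrite -/(w y) -/(w k0).
  by field.
- move=> f hf hT; exists (f - (Tk a b k0 f / w k0) *: (h0 a b * G)), ((Tk a b k0 f / w k0) *: h0 a b).
  split; last by rewrite scalerAl subrK.
  apply: (T_IY a b).
    by apply: bihomB => //; apply: bihomZ.
  move=> y yA; rewrite TkB TkZ -/(w y).
  case: (eqVneq y k0) => [->|yk].
    by rewrite divfK // subrr.
  have := hT y; rewrite inE yk yA => /(_ isT) /eqP; rewrite subr_eq0 => /eqP ->.
  by field.
Qed.

End WithG.

End Main.

Theorem proposition2p10
  (K : fieldType) (charK0 : [pchar K] =i pred0)
  (r t : nat) (Q : 'I_r -> K * K) (R : 'I_t -> K * K)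
  (* Q_i, R_j are points of P^1: nonzero and pairwise distinct *)
  (HQ0 : forall i, (Q i).1 != 0 \/ (Q i).2 != 0)
  (HR0 : forall j, (R j).1 != 0 \/ (R j).2 != 0)
  (HQd : forall i i', i != i' -> (Q i).1 * (Q i').2 != (Q i).2 * (Q i').1)
  (HRd : forall j j', j != j' -> (R j).1 * (R j').2 != (R j).2 * (R j').1)
  (D : {set 'I_r * 'I_t})
  (* pi_1(X) = {Q_1..Q_r}, pi_2(X) = {R_1..R_t} *)
  (HDr : forall i, exists j, (i, j) \in D)
  (HDt : forall j, exists i, (i, j) \in D)
  (m : 'I_r -> 'I_t -> nat) (Hm : forall i j, (0 < m i j)%N)
  (i : 'I_r) (j : 'I_t) (Hij : (i, j) \in D)
  (G : {mpoly K[4]})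
  (HGhom : exists a b, bihom G a b)
  (HG1 : in_pt_pow (Q i, R j) (m i j - 1) G)
  (HG2 : ~ in_pt_pow (Q i, R j) (m i j) G)
  (HG3 : forall k l, (k, l) \in D -> (k, l) != (i, j) -> in_pt_pow (Q k, R l) (m k l) G) :
  let IY := fun f : {mpoly K[4]} =>
    forall k l, (k, l) \in D -> in_pt_pow (Q k, R l) (m k l) f in
  let J := fun f : {mpoly K[4]} => exists g h, IY g /\ f = g + h * G in
  let degY := (\sum_(p in D) 'C(m p.1 p.2 + 1, 2))%N in
  scheme_degree IY degY /\
  (forall f, IY f -> J f) /\
  scheme_degree J (degY - 1).
Proof.
move=> IY J degY.
have [a0 [b0 hG]] := HGhom.
split; [|split].
- exists (Nb r t m) => a b ha hb; rewrite /degY -card_A0.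
  exact: (IY_dim K r t Q R HQ0 HR0 HQd HRd D m a b ha hb).
- by move=> f hf; exists f, 0; rewrite mul0r addr0.
- exists (Nb r t m + a0 + b0)%N => a b ha hb; rewrite /degY -card_A0.
  apply: (J_dim K r t Q R HQ0 HR0 HQd HRd D m i j G a0 b0 Hij hG HG1 HG2 HG3 (Hm i j)); lia.
Qed.
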